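(* Let $\beta_{ij}$ ($i\neq j$, $i,j=1,\dots,N$) be smooth functions of $\boldsymbol u=(u_1,\dots,u_N)$ satisfying the Lamé equations $$\frac{\partial\beta_{ij}}{\partial u_k}=\beta_{ik}\beta_{kj}\ (i,j,k \text{ distinct}),\qquad \frac{\partial\beta_{ij}}{\partial u_i}+\frac{\partial\beta_{ji}}{\partial u_j}+\sum_{k\neq i,j}\beta_{ki}\beta_{kj}=0\ (i\neq j).$$ Let $\boldsymbol\xi_i$ ($\mathbb R^M$-valued) and $\boldsymbol\zeta_i$ ($\mathbb R^L$-valued) satisfy $\frac{\partial\boldsymbol\xi_j}{\partial u_i}=\beta_{ji}\boldsymbol\xi_i$, $\frac{\partial\boldsymbol\zeta_j}{\partial u_i}=\beta_{ji}\boldsymbol\zeta_i$ for $i\neq j$, and set $\boldsymbol\xi^*_i=\big(\frac{\partial\boldsymbol\xi_i}{\partial u_i}+\sum_{k\neq i}\boldsymbol\xi_k\beta_{ki}\big)^{T}$, $\boldsymbol\zeta^*_i=\big(\frac{\partial\boldsymbol\zeta_i}{\partial u_i}+\sum_{k\neq i}\boldsymbol\zeta_k\beta_{ki}\big)^{T}$. Let $\Omega(\boldsymbol\xi,\boldsymbol\xi^* )$ ($M\times M$), $\Omega(\boldsymbol\xi,\boldsymbol\zeta^* )$ ($M\times L$), $\Omega(\boldsymbol\zeta,\boldsymbol\xi^* )$ ($L\times M$) be matrix functions with $\partial_{u_i}\Omega(\boldsymbol a,\boldsymbol b^* )=\boldsymbol a_i\boldsymbol b^*_i$ for all $i$ (for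 each of the three pairs $(\boldsymbol a,\boldsymbol b)$), such that $\Omega(\boldsymbol\xi,\boldsymbol\xi^* )$ is invertible and $$\Omega(\boldsymbol\xi,\boldsymbol\zeta^* )+\Omega(\boldsymbol\zeta,\boldsymbol\xi^* )^{T}=\sum_{k=1}^N\boldsymbol\xi_k\boldsymbol\zeta_k^{T},\qquad \Omega(\boldsymbol\xi,\boldsymbol\xi^* )+\Omega(\boldsymbol\xi,\boldsymbol\xi^* )^{T}=\sum_{k=1}^N\boldsymbol\xi_k\boldsymbol\xi_k^{T}.$$ Define $$\hat\beta_{ij}=\beta_{ij}-\boldsymbol\xi^*_j\,\Omega(\boldsymbol\xi,\boldsymbol\xi^* )^{-1}\boldsymbol\xi_i,\quad \hat{\boldsymbol\zeta}_i=\boldsymbol\zeta_i-\Omega(\boldsymbol\zeta,\boldsymbol\xi^* )\Omega(\boldsymbol\xi,\boldsymbol\xi^* )^{-1}\boldsymbol\xi_i,\quad \hat{\boldsymbol\zeta}^*_i=\boldsymbol\zeta^*_i-\boldsymbol\xi^*_i\,\Omega(\boldsymbol\xi,\boldsymbol\xi^* )^{-1}\Omega(\boldsymbol\xi,\boldsymbol\zeta^* ).$$ Then for every $i=1,\dots,N$, $$\hat{\boldsymbol\zeta}^*_i=\Big(\frac{\partial\hat{\boldsymbol\zeta}_i}{\partial u_i}+\sum_{k\neq i}\hat{\boldsymbol\zeta}_k\hat\beta_{ki}\Big)^{T}.$$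
   Context: Vectors are columns, starred quantities are row vectors, ${}^T$ is transpose, and $\boldsymbol a_i\boldsymbol b^*_i$ is the outer (column times row) product. All functions are smooth on an open domain of $\mathbb R^N$. *)

(* Defs.v *)
From HB Require Import structures.
From mathcomp Require Import all_boot all_order all_algebra.
From mathcomp Require Import all_classical all_reals all_analysis.
Set Implicit Arguments. Unset Strict Implicit. Unset Printing Implicit Defensive.
Import Order.TTheory GRing.Theory Num.Theory.
Import numFieldNormedType.Exports.
Local Open Scope classical_set_scope.
Local Open Scope ring_scope.

Section Defs.
Variables (R : realType) (N : nat).

Definition ebasis (i : 'I_N) : 'rV[R]_N := delta_mx 0 i.

Definition partial (W : normedModType R) (f : 'rV[R]_N -> W) (i : 'I_N)
  : 'rV[R]_N -> W := fun x => 'D_(ebasis i) f x.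

Definition ipartial (W : normedModType R) (s : seq 'I_N) (f : 'rV[R]_N -> W)
  : 'rV[R]_N -> W := foldr (fun j g => partial g j) f s.

Definition smooth_on (W : normedModType R) (D : set 'rV[R]_N)
  (f : 'rV[R]_N -> W) : Prop :=
  forall s : seq 'I_N, forall x, D x ->
    {for x, continuous (ipartial s f)} /\
    forall i : 'I_N, derivable (ipartial s f) x (ebasis i).

Definition star (m : nat) (beta : 'I_N -> 'I_N -> 'rV[R]_N -> R)
  (b : 'I_N -> 'rV[R]_N -> 'cV[R]_m) (i : 'I_N) (x : 'rV[R]_N) : 'rV[R]_m :=
  (partial (b i) i x + \sum_(k < N | k != i) beta k i x *: b k x)^T.

End Defs.

(* Main.v *)
Require Import Defs.
From HB Require Import structures.
From mathcomp Require Import all_boot all_order all_algebra.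
From mathcomp Require Import perm.
From mathcomp Require Import all_classical all_reals all_analysis.
From mathcomp Require Import ring.
Import Order.TTheory GRing.Theory Num.Theory.
Import numFieldNormedType.Exports.
Local Open Scope classical_set_scope.
Local Open Scope ring_scope.

Section helpers.
Variables (R : realType) (V : normedModType R).

Lemma derivable_bigsum (I : Type) (r : seq I) (P : pred I) (F : I -> V -> R) x v :
  (forall j, derivable (F j) x v) ->
  derivable (fun y => \sum_(j <- r | P j) F j y) x v.
Proof.
move=> dF; rewrite -fct_sumE.
elim/big_ind: _ => [|f g|j _].
- exact: (derivable_cst (0:R)).
- exact: derivableD.
- exact: dF.
Qed.

Lemma derivable_bigprod (I : Type) (r : seq I) (P : pred I) (F : I -> V -> R) x v :
  (forall j, derivable (F j) x v) ->
  derivable (fun y => \prod_(j <- r | P j) F j y) x v.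
Proof.
move=> dF; rewrite -fct_prodE.
elim/big_ind: _ => [|f g|j _].
- exact: (derivable_cst (1:R)).
- exact: derivableM.
- exact: dF.
Qed.

Lemma derivable_det n (A : V -> 'M[R]_n) x v :
  (forall i j, derivable (fun y => A y i j) x v) ->
  derivable (fun y => \det (A y)) x v.
Proof.
move=> dA; rewrite /determinant.
apply: derivable_bigsum => s.
have -> : (fun y => (-1) ^+ (s : bool) * \prod_i A y i (s i))
  = cst ((-1) ^+ (s : bool)) * (fun y => \prod_i A y i (s i)) by [].
apply: derivableM; first exact: derivable_cst.
exact: derivable_bigprod.
Qed.

Lemma derivable_mulmx m n p (A : V -> 'M[R]_(m,n)) (B : V -> 'M[R]_(n,p)) x v :
  derivable A x v -> derivable B x v -> derivable (fun y => A y *m B y) x v.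
Proof.
move=> /derivable_mxP dA /derivable_mxP dB; apply/derivable_mxP => i j.
have -> : (fun y => (A y *m B y) i j) = (fun y => \sum_k A y i k * B y k j).
  by apply/funext => y; rewrite mxE.
apply: derivable_bigsum => k.
exact: (@derivableM _ _ (fun y => A y i k) (fun y => B y k j)).
Qed.

Lemma derive_mulmx m n p (A : V -> 'M[R]_(m,n)) (B : V -> 'M[R]_(n,p)) x v :
  derivable A x v -> derivable B x v ->
  'D_v (fun y => A y *m B y) x = 'D_v A x *m B x + A x *m 'D_v B x.
Proof.
move=> dA dB; rewrite derive_mx; last exact: derivable_mulmx.
rewrite (derive_mx dA) (derive_mx dB).
move/derivable_mxP: dA => dA; move/derivable_mxP: dB => dB.
apply/matrixP => i j; rewrite !mxE.
have -> : (fun y => (A y *m B y) i j) = \sum_k (fun y => A y i k * B y k j).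
  by apply/funext => y; rewrite mxE fct_sumE.
rewrite derive_sum; last first.
  by move=> k; exact: (@derivableM _ _ (fun y => A y i k) (fun y => B y k j)).
rewrite -big_split /=; apply: eq_bigr => k _.
rewrite !mxE.
rewrite (@deriveM _ _ (fun y => A y i k) (fun y => B y k j)) //.
by rewrite addrC [B x k j *: _]mulrC.
Qed.


Lemma derivable_entry m n (A : V -> 'M[R]_(m,n)) x v i j :
  derivable A x v -> derivable (fun y => A y i j) x v.
Proof. by move/derivable_mxP; apply. Qed.

Lemma invmx_deriv n (A : V -> 'M[R]_n) (D : set V) x v :
  open D -> D x -> (forall y, D y -> A y \in unitmx) -> derivable A x v ->
  derivable (fun y => invmx (A y)) x v /\
  'D_v (fun y => invmx (A y)) x = - (invmx (A x) *m 'D_v A x *m invmx (A x)).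
Proof.
move=> oD Dx uA dA.
have [_ nD] : open D /\ nbhs x D by rewrite -open_nbhsE; split.
pose Q := fun y => (\det (A y))^-1 *: \adj (A y).
have eqQ : \forall y \near x, Q y = invmx (A y).
  by near=> y; rewrite /invmx uA //; near: y.
have dQ : derivable Q x v.
  apply/derivable_mxP => a b.
  have -> : (fun y => Q y a b) = (fun y => (\det (A y))^-1) *
      (cst ((-1) ^+ (b + a)) * (fun y => \det (row' b (col' a (A y))))).
    by apply/funext => y; rewrite /Q !mxE.
  apply: derivableM.
    apply: derivableV.
      by have := uA x Dx; rewrite unitmxE unitfE.
    apply: derivable_det => c d; exact: derivable_entry.
  apply: derivableM; first exact: derivable_cst.
  apply: derivable_det => c d.
  have -> : (fun y => row' b (col' a (A y)) c d) = (fun y => A y (lift b c) (lift a d)).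
    by apply/funext => y; rewrite !mxE.
  exact: derivable_entry.
have dP : derivable (fun y => invmx (A y)) x v.
  exact: (near_eq_derivable eqQ).
split => //.
have h1 : 'D_v (fun y => invmx (A y) *m A y) x = 0.
  rewrite (@near_eq_derive _ _ _ _ (cst 1%:M)); first exact: derive_cst.
  by near=> y; rewrite mulVmx //; apply: uA; near: y.
rewrite derive_mulmx // in h1.
have uAx := uA x Dx.
have := congr1 (fun M => M *m invmx (A x)) h1.
rewrite mul0mx mulmxDl mulmxK // => /eqP; rewrite addr_eq0 => /eqP ->.
by rewrite -mulNmx.
Unshelve. all: by end_near. Qed.

End helpers.
Arguments derive_mulmx {R V m n p A B x v}.

Lemma alg_id (R : realType) N M L (i : 'I_N) (bet : 'I_N -> R)
  (a : 'I_N -> 'cV[R]_M) (b : 'I_N -> 'cV[R]_L) (da : 'cV[R]_M) (db : 'cV[R]_L)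
  (O P : 'M[R]_M) (Z : 'M[R]_(L,M)) (W : 'M[R]_(M,L)) (as_ : 'rV[R]_M) (bs : 'rV[R]_L) :
  P *m O = 1%:M ->
  W + Z^T = \sum_k a k *m (b k)^T ->
  O + O^T = \sum_k a k *m (a k)^T ->
  as_ = (da + \sum_(k < N | k != i) bet k *: a k)^T ->
  bs = (db + \sum_(k < N | k != i) bet k *: b k)^T ->
  bs - as_ *m P *m W = (db - ((b i *m as_ *m P + Z *m -(P *m (a i *m as_) *m P)) *m a i
     + Z *m P *m da) + \sum_(k < N | k != i) (bet k - (as_ *m P *m a k) 0 0) *: (b k - Z *m P *m a k))^T.
Proof.
move=> PO HW HO Has Hbs.
set e := P^T *m as_^T.
set c := fun k => (as_ *m P *m a k) 0 0.
have cE k p (u : 'cV[R]_p) : c k *: u = u *m ((a k)^T *m e).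
  rewrite /e (mulmxA (a k)^T) -trmx_mul -trmx_mul.
  by rewrite [in RHS](mx11_scalar (as_ *m (P *m a k))) tr_scalar_mx mul_mx_scalar /c mulmxA.
set Sb := \sum_(k < N | k != i) bet k *: b k.
set Sa := \sum_(k < N | k != i) bet k *: a k.
have Hdb : db = bs^T - Sb by rewrite Hbs trmxK addrK.
have Hda : da = as_^T - Sa by rewrite Has trmxK addrK.
have Hsum : \sum_(k < N | k != i) (bet k - c k) *: (b k - Z *m P *m a k)
   = Sb - Z *m P *m Sa - \sum_(k < N | k != i) c k *: b k
     + Z *m P *m \sum_(k < N | k != i) c k *: a k.
  rewrite /Sb /Sa !mulmx_sumr -!sumrB -big_split; apply: eq_bigr => k _ /=.
  rewrite -!scalemxAr.
  move: (b k) (Z *m P *m a k) (bet k) (c k) => x y s t.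
  by apply/matrixP => r q; rewrite !mxE; ring.
have HSb : \sum_k c k *: b k = W^T *m e + Z *m e.
  under eq_bigr do rewrite cE mulmxA.
  rewrite -mulmx_suml -mulmxDl; congr (_ *m _).
  have -> : \sum_k b k *m (a k)^T = (\sum_k a k *m (b k)^T)^T.
    by rewrite linear_sum /=; apply: eq_bigr => k _; rewrite trmx_mul trmxK.
  by rewrite -HW linearD /= trmxK.
have HSa : Z *m P *m \sum_k c k *: a k = Z *m e + Z *m P *m as_^T.
  under eq_bigr do rewrite cE mulmxA.
  rewrite -mulmx_suml -HO mulmxDl mulmxDr.
  congr (_ + _).
    by rewrite !mulmxA -(mulmxA Z) PO mulmx1.
  by rewrite /e !mulmxA -(mulmxA _ (O^T)) -trmx_mul PO trmx1 mulmx1.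
rewrite (bigD1 i) //= in HSb.
rewrite (bigD1 i) //= mulmxDr in HSa.
have E1 : b i *m as_ *m P *m a i = c i *: b i.
  by rewrite -!mulmxA (mx11_scalar (as_ *m (P *m a i))) mul_mx_scalar /c mulmxA.
have E2 : Z *m -(P *m (a i *m as_) *m P) *m a i = - (Z *m P *m (c i *: a i)).
  rewrite mulmxN mulNmx -!mulmxA (mx11_scalar (as_ *m (P *m a i))) mul_mx_scalar /c mulmxA.
  by rewrite !mulmxA.
rewrite (mulmxDl (b i *m as_ *m P)) E1 E2 Hsum Hdb Hda mulmxBr.
have -> : \sum_(k < N | k != i) c k *: b k = W^T *m e + Z *m e - c i *: b i.
  by rewrite -HSb (addrC (c i *: b i)) addrK.
have -> : Z *m P *m \sum_(k < N | k != i) c k *: a k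
   = Z *m e + Z *m P *m as_^T - Z *m P *m (c i *: a i).
  by rewrite -HSa (addrC (Z *m P *m (c i *: a i))) addrK.
apply: trmx_inj; rewrite trmxK.
rewrite linearB /= !trmx_mul -/e.
set x1 := bs^T. set x3 := c i *: b i. set x4 := Z *m P *m (c i *: a i).
set x5 := Z *m P *m as_^T. set x6 := Z *m P *m Sa. set x7 := W^T *m e. set x8 := Z *m e.
clearbody x1 x3 x4 x5 x6 x7 x8 Sb.
by apply/matrixP => r q; rewrite !mxE; ring.
Qed.

Theorem lemma3 (R : realType) (N M L : nat) (D : set 'rV[R]_N)
  (beta : 'I_N -> 'I_N -> 'rV[R]_N -> R)
  (xi : 'I_N -> 'rV[R]_N -> 'cV[R]_M) (zeta : 'I_N -> 'rV[R]_N -> 'cV[R]_L)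
  (Oxx : 'rV[R]_N -> 'M[R]_(M, M)) (Oxz : 'rV[R]_N -> 'M[R]_(M, L))
  (Ozx : 'rV[R]_N -> 'M[R]_(L, M)) :
  open D ->
  (forall i j : 'I_N, i != j -> smooth_on D (beta i j)) ->
  (forall i : 'I_N, smooth_on D (xi i)) ->
  (forall i : 'I_N, smooth_on D (zeta i)) ->
  smooth_on D Oxx -> smooth_on D Oxz -> smooth_on D Ozx ->
  (* Lame equations *)
  (forall i j k : 'I_N, i != j -> j != k -> i != k -> forall x, D x ->
     partial (beta i j) k x = beta i k x * beta k j x) ->
  (forall i j : 'I_N, i != j -> forall x, D x ->
     partial (beta i j) i x + partial (beta j i) j x
     + \sum_(k < N | (k != i) && (k != j)) beta k i x * beta k j x = 0) ->
  (* equations for xi and zeta *)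
  (forall i j : 'I_N, i != j -> forall x, D x ->
     partial (xi j) i x = beta j i x *: xi i x) ->
  (forall i j : 'I_N, i != j -> forall x, D x ->
     partial (zeta j) i x = beta j i x *: zeta i x) ->
  (* derivatives of the Omega's *)
  (forall i : 'I_N, forall x, D x ->
     partial Oxx i x = xi i x *m star beta xi i x) ->
  (forall i : 'I_N, forall x, D x ->
     partial Oxz i x = xi i x *m star beta zeta i x) ->
  (forall i : 'I_N, forall x, D x ->
     partial Ozx i x = zeta i x *m star beta xi i x) ->
  (forall x, D x -> Oxx x \in unitmx) ->
  (forall x, D x ->
     Oxz x + (Ozx x)^T = \sum_(k < N) xi k x *m (zeta k x)^T) ->
  (forall x, D x ->
     Oxx x + (Oxx x)^T = \sum_(k < N) xi k x *m (xi k x)^T) ->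
  let hbeta := fun (i j : 'I_N) x =>
    beta i j x - (star beta xi j x *m invmx (Oxx x) *m xi i x) 0 0 in
  let hzeta := fun (i : 'I_N) x =>
    zeta i x - Ozx x *m invmx (Oxx x) *m xi i x in
  let hzetastar := fun (i : 'I_N) x =>
    star beta zeta i x - star beta xi i x *m invmx (Oxx x) *m Oxz x in
  forall (i : 'I_N) x, D x ->
    hzetastar i x
    = (partial (hzeta i) i x + \sum_(k < N | k != i) hbeta k i x *: hzeta k x)^T.
Proof.
Proof.
move=> oD sbeta sxi szeta sOxx sOxz sOzx _ _ _ _ dOxx dOxz dOzx uO HW HO
  hbeta hzeta hzetastar i x Dx.
have dxi : derivable (xi i) x (ebasis R i) := ((sxi i) [::] x Dx).2 i.
have dzeta : derivable (zeta i) x (ebasis R i) := ((szeta i) [::] x Dx).2 i.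
have dOx : derivable Oxx x (ebasis R i) := (sOxx [::] x Dx).2 i.
have dZ : derivable Ozx x (ebasis R i) := (sOzx [::] x Dx).2 i.
have [dP DP] := @invmx_deriv R _ M Oxx D x (ebasis R i) oD Dx uO dOx.
have e1 : 'D_(ebasis R i) Ozx x = zeta i x *m star beta xi i x := dOzx i x Dx.
have e2 : 'D_(ebasis R i) Oxx x = xi i x *m star beta xi i x := dOxx i x Dx.
rewrite /hzetastar /hbeta /hzeta /partial.
have -> : (fun y => zeta i y - Ozx y *m invmx (Oxx y) *m xi i y)
  = zeta i - (fun y => (Ozx y *m invmx (Oxx y)) *m xi i y) by [].
have dZP : derivable (fun y => Ozx y *m invmx (Oxx y)) x (ebasis R i).
  exact: derivable_mulmx dZ dP.
have dZPx : derivable (fun y => (Ozx y *m invmx (Oxx y)) *m xi i y) x (ebasis R i).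
  exact: derivable_mulmx dZP dxi.
rewrite (deriveB dzeta dZPx).
rewrite (derive_mulmx dZP dxi).
rewrite (derive_mulmx dZ dP) DP e1 e2.
have PO : invmx (Oxx x) *m Oxx x = 1%:M by rewrite mulVmx // uO.
have := @alg_id R N M L i (fun k => beta k i x) (fun k => xi k x) (fun k => zeta k x)
  (partial (xi i) i x) (partial (zeta i) i x) (Oxx x) (invmx (Oxx x)) (Ozx x) (Oxz x)
  (star beta xi i x) (star beta zeta i x) PO (HW x Dx) (HO x Dx) erefl erefl.
move=> ->.
by [].
Qed.
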